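(* Let $n\geq 27$. If $\phi$ is a character of $\operatorname{Sym}(n)$ of degree less than $5\binom{n}{3}$ and $\chi^\lambda$ is an irreducible constituent of $\phi$, then $\lambda$ is one of $[n],[1^n],[n-1,1],[2,1^{n-2}],[n-2,2],[2^2,1^{n-4}],[n-2,1^2],[3,1^{n-3}],[n-3,3],[2^3,1^{n-6}],[n-3,1^3],[4,1^{n-4}],[n-3,2,1],[3,2,1^{n-5}]$.
   Context: For a partition $\lambda\vdash n$, $\chi^\lambda$ denotes the irreducible complex character of $\operatorname{Sym}(n)$ afforded by the Specht module $S^\lambda$. Exponents in partitions denote repeated parts, e.g. $[2^2,1^{n-4}]=[2,2,1,\ldots,1]$. *)

(* Defs.v *)
From HB Require Import structures.
From mathcomp Require Import all_boot all_order all_algebra all_fingroup all_solvable all_field all_character.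
Set Implicit Arguments. Unset Strict Implicit. Unset Printing Implicit Defensive.
Import Order.TTheory GRing.Theory Num.Theory.
Local Open Scope ring_scope.

Definition is_partition (n : nat) (l : seq nat) : bool :=
  [&& sorted geq l, 0%N \notin l & sumn l == n].

(* Canonical (row-by-row) position (row, column) of slot m in the Young
   diagram of l: slots 0 .. l_0 - 1 fill row 0, the next l_1 fill row 1, ... *)
Fixpoint cell_of (l : seq nat) (m : nat) : nat * nat :=
  match l with
  | [::] => (0%N, m)
  | a :: l' => if (m < a)%N then (0%N, m)
               else let rc := cell_of l' (m - a) in (rc.1.+1, rc.2)
  end.

(* Tabloids, encoded by their row assignment (entry x lies in row r x). *)
Definition tabloid (n : nat) := {ffun 'I_n -> 'I_n.+1}.
Definition dimM (n : nat) : nat := #|{: tabloid n}|.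

Definition tvec n (r : tabloid n) : 'rV[algC]_(dimM n) := delta_mx 0 (enum_rank r).

(* Action of g on tabloids: replace each entry x by g x. *)
Definition tact n (g : 'S_n) (r : tabloid n) : tabloid n :=
  [ffun y => r ((g^-1)%g y)].

(* Matrix (acting on row vectors) of v |-> g . v on M. *)
Definition tperm_mx n (g : 'S_n) : 'M[algC]_(dimM n) :=
  \matrix_(i, j) ((enum_val j == tact g (enum_val i))%:R).

(* The tableau t_s of shape l (s : 'S_n) has entry x in the cell cell_of l (s x).
   Its tabloid is determined by rows of entries. *)
Definition tab_of n (l : seq nat) (s : 'S_n) : tabloid n :=
  [ffun x => inord (cell_of l (s x)).1].

Definition colstab n (l : seq nat) (s : 'S_n) : pred 'S_n :=
  fun p => [forall x, (cell_of l (s (p x))).2 == (cell_of l (s x)).2].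

(* Polytabloid e_{t_s} = sum_{p in C_{t_s}} sgn(p) {p t_s};
   the tableau p t_s has entry p x where t_s has x, i.e. slot map (p^-1 * s). *)
Definition polytabloid n (l : seq nat) (s : 'S_n) : 'rV[algC]_(dimM n) :=
  \sum_(p : 'S_n | colstab l s p) ((-1) ^+ odd_perm p) *: tvec (tab_of l (p^-1 * s)%g).

Definition specht_span n (l : seq nat) : 'M[algC]_(#|{: 'S_n}|, dimM n) :=
  \matrix_(i < #|{: 'S_n}|) polytabloid l (enum_val i).

(* chi^l(g) = trace of the action of g on the (invariant) subspace S^l,
   computed in the basis row_base (specht_span l). *)
Definition specht_char n (l : seq nat) (g : 'S_n) : algC :=
  let B := row_base (specht_span n l) in
  \tr (B *m tperm_mx g *m pinvmx B).

Definition lemma3p2_list (n : nat) : seq (seq nat) :=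
  [:: [:: n]; nseq n 1%N;
      [:: n - 1; 1]%N; (2 :: nseq (n - 2) 1)%N;
      [:: n - 2; 2]%N; ([:: 2; 2] ++ nseq (n - 4) 1)%N;
      [:: n - 2; 1; 1]%N; (3 :: nseq (n - 3) 1)%N;
      [:: n - 3; 3]%N; ([:: 2; 2; 2] ++ nseq (n - 6) 1)%N;
      [:: n - 3; 1; 1; 1]%N; (4 :: nseq (n - 4) 1)%N;
      [:: n - 3; 2; 1]%N; ([:: 3; 2] ++ nseq (n - 5) 1)%N].

(* Main.v *)
Require Import Defs.
From HB Require Import structures.
From mathcomp Require Import all_boot all_order all_algebra all_fingroup all_solvable all_field all_character.
From mathcomp Require Import zify.
Import Order.TTheory GRing.Theory Num.Theory.
Set Implicit Arguments. Unset Strict Implicit. Unset Printing Implicit Defensive.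

Definition ispart (l : seq nat) := sorted geq l && (0 \notin l).

Lemma ispartP l : reflect
  ((forall t, t.+1 < size l -> nth 0 l t.+1 <= nth 0 l t) /\
   (forall t, t < size l -> 0 < nth 0 l t)) (ispart l).
Proof.
apply: (iffP andP) => [[/(sortedP 0) H1 H2]|[H1 H2]]; split.
- by move=> t /H1.
- move=> t lt; rewrite lt0n; apply: contra H2 => /eqP <-; exact: mem_nth.
- by apply/(sortedP 0) => t /H1.
- apply/negP => /(nthP 0) [t lt e]; by move: (H2 t lt); rewrite e.
Qed.

Lemma part_mono l t u : ispart l -> t <= u -> nth 0 l u <= nth 0 l t.
Proof.
move=> /ispartP [H1 H2] tu; elim: u tu => [|u IH]; first by rewrite leqn0 => /eqP ->.
rewrite leq_eqVlt => /orP [/eqP -> //|]; rewrite ltnS => /IH.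
case: (ltnP u.+1 (size l)) => [/H1 h|h]; first by move=> h'; exact: leq_trans h h'.
by move=> _; rewrite (nth_default 0 h).
Qed.

Lemma part_pos l t : ispart l -> t < size l -> 0 < nth 0 l t.
Proof. by move=> /ispartP [_ H]; apply: H. Qed.

Definition corner (l : seq nat) (i : nat) : bool :=
  (i < size l) && (nth 0 l i.+1 < nth 0 l i).

Definition remc (l : seq nat) (i : nat) : seq nat :=
  [seq x <- set_nth 0 l i (nth 0 l i).-1 | x != 0].

Lemma remc_cases l i : ispart l -> corner l i ->
  (1 < nth 0 l i /\ remc l i = set_nth 0 l i (nth 0 l i).-1) \/
  (nth 0 l i = 1 /\ i.+1 = size l /\ remc l i = take i l).
Proof.
move=> pl /andP [il ci].
case: (ltnP 1 (nth 0 l i)) => h.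
  left; split => //; apply/all_filterP/allP => x /(nthP 0) [t].
  rewrite size_set_nth nth_set_nth /= => tl <-.
  case: (eqVneq t i) => [e|ne]; rewrite -lt0n; first lia.
  apply: part_pos => //; move: tl il; rewrite /maxn; case: (ltnP i.+1 (size l)); lia.
right.
have li : nth 0 l i = 1 by move: (part_pos pl il); lia.
have si : i.+1 = size l.
  apply/eqP; rewrite eqn_leq il /=; rewrite leqNgt; apply/negP => /(part_pos pl).
  by rewrite li in ci; lia.
split => //; split => //.
rewrite /remc li /= set_nthE il.
have -> : drop i.+1 l = [::] by rewrite si drop_size.
rewrite filter_cat /= cats0; apply/all_filterP/allP => x /(nthP 0) [t].
rewrite size_take il => ti <-; rewrite nth_take //.
by rewrite -lt0n; apply: part_pos; lia.
Qed.

Lemma remc_nth l i t : ispart l -> corner l i ->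
  nth 0 (remc l i) t = nth 0 l t - (t == i).
Proof.
move=> pl ci; case: (remc_cases pl ci) => [[h ->]|[h [si ->]]].
  by rewrite nth_set_nth /=; case: eqP => [->|]; rewrite ?subn0 //; lia.
case: (ltnP t i) => ti.
  by rewrite nth_take // (_ : (t == i) = false) ?subn0 //; lia.
rewrite nth_default ?size_take; last by move: si; case: ltnP; lia.
case: (eqVneq t i) => [->|ne]; first by rewrite h.
rewrite (nth_default 0 (_ : size l <= t)) //; lia.
Qed.

Lemma remc_size l i : ispart l -> corner l i -> size (remc l i) <= size l.
Proof.
move=> pl ci; case: (remc_cases pl ci) => [[h ->]|[h [si ->]]].
  by rewrite size_set_nth; case/andP: ci => il _; rewrite /maxn; case: (ltnP i.+1 (size l)); lia.
by rewrite size_take; case: (ltnP i (size l)); lia.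
Qed.

Lemma remc_part l i : ispart l -> corner l i -> ispart (remc l i).
Proof.
move=> pl ci; apply/ispartP; split.
  move=> t ts; rewrite !remc_nth //.
  have := part_mono pl (leqnSn t); case/andP: ci => il ci.
  case: (eqVneq t i) => [->|ne]; first by rewrite (_ : (i.+1 == i) = false); lia.
  by case: eqP => _; lia.
move=> t ts; rewrite lt0n; apply/eqP => e.
have : nth 0 (remc l i) t \in remc l i by exact: mem_nth.
by rewrite e mem_filter.
Qed.

Lemma sumn_filter0 s : sumn [seq x <- s | x != 0] = sumn s.
Proof. by elim: s => //= x s IH; case: eqP => [->|_] /=; rewrite IH. Qed.

Lemma nth_le_sumn s i : nth 0 s i <= sumn s.
Proof. by elim: s i => [|x s IH] [|i] //=; [lia | have := IH i; lia]. Qed.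

Lemma remc_sumn l i : ispart l -> corner l i -> sumn (remc l i) = (sumn l).-1.
Proof.
move=> pl ci; rewrite /remc sumn_filter0; case/andP: (ci) => il _.
rewrite sumn_set_nth_ltn //; have := part_pos pl il.
have := nth_le_sumn l i; lia.
Qed.

Definition corners l := [seq i <- iota 0 (size l) | corner l i].

Lemma mem_corners l i : (i \in corners l) = corner l i.
Proof.
rewrite mem_filter mem_iota /= /corner; case: (i < size l); by rewrite ?andbF ?andbT.
Qed.

Fixpoint Fn (m : nat) (l : seq nat) : nat :=
  match m with
  | 0 => 1
  | m'.+1 => if l is [::] then 1 else sumn [seq Fn m' (remc l i) | i <- corners l]
  end.

Fixpoint Wn (m : nat) (l : seq nat) : seq (seq nat) :=
  match m with
  | 0 => [:: [::]]
  | m'.+1 => if l is [::] then [:: [::]] else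
      [seq rcons w i | i <- corners l, w <- Wn m' (remc l i)]
  end.

Lemma size_Wn m l : size (Wn m l) = Fn m l.
Proof.
elim: m l => [|m IH] [|a l] //=; rewrite size_allpairs_dep.
by congr sumn; apply: eq_map => i; rewrite IH.
Qed.

Definition F l := Fn (sumn l) l.

Lemma F_rec l : ispart l -> l != [::] ->
  F l = sumn [seq F (remc l i) | i <- corners l].
Proof.
move=> pl nl; rewrite /F.
have : 0 < sumn l.
  case: l pl nl => // a l pl _ /=; have := part_pos pl (ltn0Sn _); simpl; lia.
case e: (sumn l) => [//|m] _; case: l pl nl e => // a l pl _ e /=.
congr sumn; apply/eq_in_map => i; rewrite mem_corners => ci.
by rewrite remc_sumn // e.
Qed.

Lemma sumn_map_ge1 (f : nat -> nat) s i : i \in s -> f i <= sumn (map f s).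
Proof.
elim: s => //= x s IH; rewrite in_cons => /orP [/eqP ->|/IH]; lia.
Qed.

Lemma sumn_map_ge2 (f : nat -> nat) s i j : i \in s -> j \in s -> i != j ->
  f i + f j <= sumn (map f s).
Proof.
elim: s => //= x s IH; rewrite !in_cons.
case: (eqVneq i x) => [->|ix] /=.
  by move=> _ js; rewrite eq_sym => /negbTE nx; rewrite nx /= in js;
     have := sumn_map_ge1 f js; lia.
case: (eqVneq j x) => [->|jx] /= iS.
  by move=> _ _; have := sumn_map_ge1 f iS; lia.
by move=> js ne; have := IH iS js ne; lia.
Qed.

Lemma last_corner l : ispart l -> l != [::] -> corner l (size l).-1.
Proof.
move=> pl nl; have sl : 0 < size l by case: (l) nl.
rewrite /corner; apply/andP; split; first lia.
rewrite nth_default; last lia.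
by apply: part_pos; lia.
Qed.

Lemma F_ge1 l : ispart l -> 0 < F l.
Proof.
move e : (sumn l) => m; elim: m l e => [|m IH] l e pl.
  by rewrite /F e.
have nl : l != [::] by case: l e pl.
rewrite F_rec //; have cl := last_corner pl nl.
apply: leq_trans (sumn_map_ge1 _ (_ : (size l).-1 \in corners l)); last by rewrite mem_corners.
apply: IH; last exact: remc_part.
by rewrite remc_sumn // e.
Qed.

Lemma F_ge_corner l i : ispart l -> corner l i -> F (remc l i) <= F l.
Proof.
move=> pl ci; have nl : l != [::] by case: (l) ci => //; case: i.
by rewrite (F_rec pl nl); apply: sumn_map_ge1; rewrite mem_corners.
Qed.

Lemma F_ge_corner2 l i j : ispart l -> corner l i -> corner l j -> i != j ->
  F (remc l i) + F (remc l j) <= F l.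
Proof.
move=> pl ci cj ij; have nl : l != [::] by case: (l) ci => //; case: i.
by rewrite (F_rec pl nl); apply: sumn_map_ge2; rewrite ?mem_corners.
Qed.

Fixpoint sc (f : seq nat -> nat -> nat) (cs : seq (seq nat)) (t : nat) : nat :=
  match cs with
  | [::] => 0
  | c :: cs' => let v := f c t in if t <= v then t else v + sc f cs' (t - v)
  end.

Fixpoint Lc (m : nat) (l : seq nat) (t : nat) : nat :=
  match m with
  | 0 => minn t 1
  | m'.+1 => if l is [::] then minn t 1 else sc (Lc m') [seq remc l i | i <- corners l] t
  end.

Lemma sc_min f g cs t : (forall c t, f c t = minn t (g c)) ->
  sc f cs t = minn t (sumn (map g cs)).
Proof.
move=> H; elim: cs t => [|c cs IH] t /=; first by lia.
rewrite H IH; case: (leqP t (minn t (g c))); lia.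
Qed.

Lemma Lc_min m l t : Lc m l t = minn t (Fn m l).
Proof.
elim: m l t => [|m IH] l t //=; case: l => [//|a l].
by rewrite (sc_min _ _ IH) -map_comp.
Qed.

Fixpoint pl (f n m : nat) : seq (seq nat) :=
  match f with
  | 0 => if n is 0 then [:: [::]] else [::]
  | f'.+1 => if n is 0 then [:: [::]] else
     [seq a :: p | a <- iota 1 (minn n m), p <- pl f' (n - a) a]
  end.

Lemma pl_complete f l m : ispart l -> sumn l <= f -> nth 0 l 0 <= m ->
  l \in pl f (sumn l) m.
Proof.
elim: f l m => [|f IH] [|a l] m //= pal.
- have := part_pos pal (ltn0Sn _) => /=; lia.
- move=> sf am; have a0 := part_pos pal (ltn0Sn _); simpl in a0.
  case e : (a + sumn l) => [|n]; first lia.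
  rewrite -e; apply: (@allpairs_f_dep _ _ _ (fun a p => a :: p)).
    rewrite mem_iota; lia.
  have pl' : ispart l by rewrite /ispart; case/andP: pal => /= /path_sorted -> /=; rewrite in_cons negb_or => /andP [].
  rewrite (_ : a + sumn l - a = sumn l); last lia.
  apply: IH => //; first lia.
  case: l pl' pal {e sf} => [//|b l] _ pal /=; have := part_mono pal (leq0n 1); by [].
Qed.

Definition Cm n k := if k is k'.+1 then 'C(n, k') else 0.

Definition base_ok n := all (fun l => all (fun k =>
   (nth 0 l 0 + k <= n) ==> (size l + k <= n) ==>
   ('C(n, k) <= Lc n l 'C(n, k) + Cm n k)) (iota 0 5)) (pl n n n).

Lemma base15 : base_ok 15. Proof. Time vm_compute. reflexivity. Qed.
Lemma base16 : base_ok 16. Proof. Time vm_compute. reflexivity. Qed.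

Lemma all_ge_sumn c l : all (fun x => c <= x) l -> c * size l <= sumn l.
Proof. elim: l => [|x l IH] /=; first by rewrite muln0. case/andP => h /IH; lia. Qed.

Lemma all_le_sumn c l : all (fun x => x <= c) l -> sumn l <= c * size l.
Proof. elim: l => [|x l IH] /=; first by rewrite muln0. case/andP => h /IH; lia. Qed.

Lemma part_all_le l : ispart l -> all (fun x => x <= nth 0 l 0) l.
Proof. move=> pl; apply/allP => x /(nthP 0) [t _ <-]; exact: part_mono. Qed.

Lemma part_all_ge l : ispart l -> all (fun x => nth 0 l (size l).-1 <= x) l.
Proof. move=> pl; apply/allP => x /(nthP 0) [t ts <-]; apply: (part_mono pl); by rewrite -ltnS (ltn_predK ts). Qed.

Lemma part_all_pos l : ispart l -> all (fun x => 1 <= x) l.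
Proof. move=> pl; apply/allP => x /(nthP 0) [t ts <-]; exact: part_pos. Qed.

Lemma sumn_ge_size l : ispart l -> size l <= sumn l.
Proof. by move=> /part_all_pos /all_ge_sumn; rewrite mul1n. Qed.

Lemma sumn_le_head l : ispart l -> sumn l <= nth 0 l 0 * size l.
Proof. by move=> /part_all_le /all_le_sumn. Qed.

Lemma sumn_ge_last l : ispart l -> nth 0 l (size l).-1 * size l <= sumn l.
Proof. by move=> /part_all_ge /all_ge_sumn. Qed.

Lemma head_size l : ispart l -> nth 0 l 0 + (size l).-1 <= sumn l.
Proof.
case: l => [//|a l] pl /=.
have pl' : ispart l by rewrite /ispart; case/andP: pl => /= /path_sorted -> /=; rewrite in_cons negb_or => /andP [].
have := sumn_ge_size pl'; lia.
Qed.

Lemma nth01 l : nth 0 l 0 + nth 0 l 1 <= sumn l.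
Proof. case: l => [//|a [|b l]] /=; lia. Qed.

Lemma remc_head l i : ispart l -> corner l i -> nth 0 (remc l i) 0 = nth 0 l 0 - (0 == i).
Proof. by move=> pl ci; rewrite remc_nth. Qed.

Lemma remc_size1 l i : ispart l -> corner l i -> nth 0 l i = 1 -> size (remc l i) = (size l).-1.
Proof.
move=> pl ci h; case: (remc_cases pl ci) => [[h' _]|[_ [si ->]]]; first lia.
rewrite size_take; rewrite -si; case: ltnP; lia.
Qed.

Lemma no_mid_corner l : ispart l -> (forall i, i < (size l).-1 -> ~~ corner l i) ->
  forall t, t < size l -> nth 0 l t = nth 0 l 0.
Proof.
move=> pl H; elim=> [//|t IH] ts.
have := H t (ltac:(lia)); rewrite /corner (_ : t < size l); last lia.
rewrite /= -leqNgt => h; rewrite -IH; last lia.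
by apply/eqP; rewrite eqn_leq h part_mono.
Qed.

Definition Pst n k := forall l, ispart l -> sumn l = n -> nth 0 l 0 + k <= n ->
  size l + k <= n -> 'C(n, k) <= F l + Cm n k.

Lemma base_P n k : base_ok n -> k <= 4 -> Pst n k.
Proof.
move=> /allP B k4 l pl sl h s.
subst n; have := B l (pl_complete pl (leqnn _) (nth_le_sumn _ _)).
move=> /allP /(_ k); rewrite mem_iota /= => /(_ (ltac:(lia))).
rewrite h s /= Lc_min /F; lia.
Qed.

Lemma CmS n k : 'C(n.+1, k) = 'C(n, k) + Cm n k.
Proof. by case: k => [|k] /=; rewrite ?bin0 ?addn0 ?binS. Qed.

Lemma C2e n : 2 * 'C(n, 2) = n * (n - 1).
Proof. by rewrite (mul_bin_left n 1) bin1 mulnC. Qed.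

Lemma C3e n : 6 * 'C(n, 3) = n * (n - 1) * (n - 2).
Proof. by rewrite (_ : 6 = 2 * 3) // -mulnA (mul_bin_left n 2) mulnCA C2e mulnC. Qed.

Lemma C4e n : 24 * 'C(n, 4) = n * (n - 1) * (n - 2) * (n - 3).
Proof. by rewrite (_ : 24 = 6 * 4) // -mulnA (mul_bin_left n 3) mulnCA C3e mulnC. Qed.

Lemma C2s m : 2 * 'C(m.+1, 2) = m.+1 * m.
Proof. by rewrite C2e subn1. Qed.
Lemma C3s m : 6 * 'C(m.+2, 3) = m.+2 * m.+1 * m.
Proof. by rewrite C3e !subSS !subn0. Qed.
Lemma C4s m : 24 * 'C(m.+3, 4) = m.+3 * m.+2 * m.+1 * m.
Proof. by rewrite C4e !subSS !subn0. Qed.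

Lemma ineq1 n k : 16 <= n -> 1 <= k <= 4 -> 2 * 'C(n, k.-1) <= 'C(n, k) + Cm n k.-1.
Proof.
move=> n16 /andP [k1 k4]; rewrite -(subnKC n16); move: (n - 16) => p.
have h2 : 2 * 'C(16+p, 2) = (16+p) * (15+p) := C2s (15+p).
have h3 : 6 * 'C(16+p, 3) = (16+p) * (15+p) * (14+p) := C3s (14+p).
have h4 : 24 * 'C(16+p, 4) = (16+p) * (15+p) * (14+p) * (13+p) := C4s (13+p).
have m2 := leq0n (p * p); have m3 := leq0n (p * p * p); have m4 := leq0n (p * p * p * p).
case: k k1 k4 => [|[|[|[|[|k]]]]] //= _ _; rewrite ?bin0 ?bin1; lia.
Qed.

Lemma ineq2 n k : 16 <= n -> 1 <= k <= 4 ->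
  'C(n, k) + 2 * Cm n.-1 k <= 2 * 'C(n.-1, k) + Cm n k.-1.
Proof.
move=> n16 /andP [k1 k4]; rewrite -(subnKC n16); move: (n - 16) => p.
have -> : (16 + p).-1 = 15 + p by [].
have h2 : 2 * 'C(16+p, 2) = (16+p) * (15+p) := C2s (15+p).
have h3 : 6 * 'C(16+p, 3) = (16+p) * (15+p) * (14+p) := C3s (14+p).
have h4 : 24 * 'C(16+p, 4) = (16+p) * (15+p) * (14+p) * (13+p) := C4s (13+p).
have g2 : 2 * 'C(15+p, 2) = (15+p) * (14+p) := C2s (14+p).
have g3 : 6 * 'C(15+p, 3) = (15+p) * (14+p) * (13+p) := C3s (13+p).
have g4 : 24 * 'C(15+p, 4) = (15+p) * (14+p) * (13+p) * (12+p) := C4s (12+p).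
have m2 := leq0n (p * p); have m3 := leq0n (p * p * p); have m4 := leq0n (p * p * p * p).
case: k k1 k4 => [|[|[|[|[|k]]]]] //= _ _; rewrite ?bin0 ?bin1; lia.
Qed.

Lemma Pst0 n : Pst n 0.
Proof. move=> l pl _ _ _; rewrite bin0 /=; have := F_ge1 pl; lia. Qed.

Lemma mid_corner l : ispart l ->
  (exists2 i, i < (size l).-1 & corner l i) \/
  (forall t, t < size l -> nth 0 l t = nth 0 l 0).
Proof.
move=> pl; case: (boolP (has (corner l) (iota 0 (size l).-1))).
  by move=> /hasP [i]; rewrite mem_iota /= => ij ci; left; exists i.
move=> /hasPn H; right; apply: no_mid_corner => // i ij; apply: H; rewrite mem_iota; lia.
Qed.

Lemma Pst_step n k : 16 <= n -> 1 <= k <= 4 -> Pst n k -> Pst n k.-1 -> Pst n.-1 k ->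
  Pst n.+1 k.
Proof.
case: k => [//|k] n16 /andP [_ k4] /= Pk Pk' Pk'' l pl sl ha hs.
rewrite /= !CmS /=.
have nl : l != [::] by case: (l) sl.
set a := nth 0 l 0 in ha *; set b := size l in hs *; set j := b.-1.
have b1 : 0 < b by rewrite /b; case: (l) nl.
have cj : corner l j := last_corner pl nl.
have a1 : 0 < a := part_pos pl b1.
have hsz := head_size pl; have sle := sumn_le_head pl; have sge := sumn_ge_last pl.
rewrite -/a -/b sl in hsz sle sge.
have Fj := F_ge_corner pl cj.
have pj := remc_part pl cj; have sj := remc_sumn pl cj; rewrite sl /= in sj.
have szj := remc_size pl cj; have hj := remc_head pl cj.
case: (eqVneq (a + k.+1) n.+1) => [eA|nA].
  have b2 : 1 < b.
    rewrite ltnNge; apply/negP => b1'; have bb : b = 1 by lia.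
    by rewrite bb muln1 in sle; lia.
  have n1 := nth01 l; rewrite sl -/a in n1.
  have c0 : corner l 0 by rewrite /corner b1 /=; lia.
  have p0 := remc_part pl c0; have s0 := remc_sumn pl c0; rewrite sl /= in s0.
  have sz0 := remc_size pl c0; have h0 := remc_head pl c0.
  have H1 := Pk _ p0 s0; rewrite h0 eqxx /= -/a in H1.
  have {H1} H1 := H1 (ltac:(lia)) (ltac:(lia)).
  have j0 : (0 == j) = false by apply/eqP; rewrite /j; lia.
  have H2 := Pk' _ pj sj; rewrite hj j0 /= -/a in H2.
  have {H2} H2 := H2 (ltac:(lia)) (ltac:(lia)).
  have := F_ge_corner2 pl c0 cj (negbT j0); lia.
case: (eqVneq (b + k.+1) n.+1) => [eB|nB].
  have lj1 : nth 0 l j = 1.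
    have := part_pos pl (_ : j < b); rewrite /j => /(_ (ltac:(lia))) p.
    case: (leqP (nth 0 l b.-1) 1) => h; first lia.
    have : 2 * b <= nth 0 l b.-1 * b by rewrite leq_mul2r; lia.
    lia.
  have szj' := remc_size1 pl cj lj1.
  have j0 : (0 == j) = false by apply/eqP; rewrite /j; lia.
  have H1 := Pk _ pj sj; rewrite hj j0 szj' /= -/a -/b in H1.
  have {H1} H1 := H1 (ltac:(lia)) (ltac:(lia)).
  have a2 : 1 < a by rewrite ltnNge; apply/negP => a1'; move: sle;
    rewrite (_ : a = 1); [rewrite mul1n; lia | lia].
  case: (mid_corner pl) => [[i ij ci]|H].
    have pi := remc_part pl ci; have si := remc_sumn pl ci; rewrite sl /= in si.
    have szi := remc_size pl ci; have hi := remc_head pl ci.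
    have H2 := Pk' _ pi si; rewrite hi -/a in H2.
    have {H2} H2 := H2 (ltac:(lia)) (ltac:(lia)).
    have ij' : j != i by apply/eqP; rewrite /j; lia.
    have := F_ge_corner2 pl cj ci ij'; lia.
  have := H j (ltac:(lia)); rewrite lj1 -/a; lia.
have ha' : a + k.+1 <= n by lia.
have hs' : b + k.+1 <= n by lia.
case: (mid_corner pl) => [[i ij ci]|H].
  have pi := remc_part pl ci; have si := remc_sumn pl ci; rewrite sl /= in si.
  have szi := remc_size pl ci; have hi := remc_head pl ci.
  have H1 := Pk _ pj sj (ltac:(lia)) (ltac:(lia)).
  have H2 := Pk _ pi si (ltac:(lia)) (ltac:(lia)).
  have ij' : j != i by apply/eqP; rewrite /j; lia.
  have I1 := ineq1 (k := k.+1) n16 (ltac:(lia)); simpl in I1.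
  simpl in H1, H2; have := F_ge_corner2 pl cj ci ij'; lia.
have ljA : nth 0 l j = a by apply: H; rewrite /j; lia.
rewrite -/j ljA in sge.
have sab : a * b = n.+1 by lia.
have a2 : 1 < a.
  rewrite ltnNge; apply/negP => a1'; move: sab; rewrite (_ : a = 1); [rewrite mul1n; lia | lia].
have b2 : 1 < b.
  rewrite ltnNge; apply/negP => b1'; move: sab; rewrite (_ : b = 1); [rewrite muln1; lia | lia].
have ab1 : 2 * a <= a * b by rewrite mulnC leq_mul2l; lia.
have ab2 : 2 * b <= a * b by rewrite leq_mul2r; lia.
set m := remc l j.
have mn t : nth 0 m t = nth 0 l t - (t == j) by rewrite remc_nth.
have mj : nth 0 m j = a - 1 by rewrite mn eqxx ljA.
have mj1 : nth 0 m j.+1 = 0.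
  rewrite mn (_ : (j.+1 == j) = false); last by apply/eqP; lia.
  rewrite nth_default //; rewrite /j; lia.
have jm : j < size m.
  rewrite ltnNge; apply/negP => jm; have := nth_default 0 jm; rewrite mj; lia.
have cm1 : corner m j by rewrite /corner jm mj mj1 /=; lia.
have mj2 : nth 0 m j.-1 = a.
  rewrite mn (_ : (j.-1 == j) = false); last by apply/eqP; rewrite /j; lia.
  rewrite H /=; [lia | rewrite /j; lia].
have cm2 : corner m j.-1.
  rewrite /corner (_ : j.-1.+1 = j); last by rewrite /j; lia.
  rewrite mj mj2; apply/andP; split; lia.
have m12 : j != j.-1 by apply/eqP; rewrite /j; lia.
have F12 := F_ge_corner2 pj cm1 cm2 m12.
have p1 := remc_part pj cm1; have s1 := remc_sumn pj cm1; rewrite sj in s1.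
have p2 := remc_part pj cm2; have s2 := remc_sumn pj cm2; rewrite sj in s2.
have z1 := remc_size pj cm1; have z2 := remc_size pj cm2.
have e1 := remc_head pj cm1; have e2 := remc_head pj cm2.
have hm : nth 0 m 0 <= a by rewrite mn; lia.
have H1 := Pk'' _ p1 s1 (ltac:(lia)) (ltac:(lia)).
have H2 := Pk'' _ p2 s2 (ltac:(lia)) (ltac:(lia)).
have I2 := ineq2 (k := k.+1) n16 (ltac:(lia)); simpl in I2.
simpl in H1, H2; lia.
Qed.

Lemma Pst_all n k : 15 <= n -> k <= 4 -> Pst n k.
Proof.
elim: n {-2}n (leqnn n) k => [|N IH] n nN k n15 k4; first lia.
case: (ltnP n 17) => n17.
  case: (eqVneq n 15) => [->|n15']; first exact: base_P base15 k4.
  have -> : n = 16 by lia.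
  exact: base_P base16 k4.
case: n nN n15 n17 => [//|n] nN _ n17.
case: k k4 => [|k] k4; first exact: Pst0.
apply: Pst_step; first lia.
- by rewrite /= ltnS.
- apply: IH; lia.
- apply: IH; lia.
- apply: IH; lia.
Qed.

Lemma ispart_tail a l : ispart (a :: l) -> ispart l.
Proof. by rewrite /ispart; case/andP => /= /path_sorted -> /=; rewrite in_cons negb_or => /andP []. Qed.

Lemma part_split l : ispart l -> exists t, l = [seq x <- l | 1 < x] ++ nseq t 1.
Proof.
elim: l => [|x l IH] pl; first by exists 0.
have pl' := ispart_tail pl.
have x1 : 0 < x by have := part_pos pl (ltn0Sn (size l)).
case: (ltnP 1 x) => h.
  by have [t {1}->] := IH pl'; exists t; rewrite /= h.
have -> : x = 1 by lia.
exists (size l).+1; rewrite /=.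
have all1 : all (pred1 1) l.
  apply/allP => y /(nthP 0) [t ts <-] /=.
  have := part_mono pl (leq0n t.+1); have := part_pos pl (_ : t.+1 < size (x :: l)).
  rewrite /= ltnS => /(_ ts) /=; lia.
move/all_pred1P: (all1) => e; rewrite {1 2}e.
by rewrite (_ : [seq x <- nseq (size l) 1 | 1 < x] = [::]) //; elim: (size l).
Qed.

Ltac inlist := by rewrite /lemma3p2_list !inE eqxx ?orbT.
Ltac finh a n := first [ rewrite (_ : a = n); [inlist | lia]
  | rewrite (_ : a = n - 1); [inlist | lia]
  | rewrite (_ : a = n - 2); [inlist | lia]
  | rewrite (_ : a = n - 3); [inlist | lia] ].

Lemma list_head n l : 27 <= n -> ispart l -> sumn l = n -> n < nth 0 l 0 + 4 ->
  l \in lemma3p2_list n.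
Proof.
move=> n27 pl sl h; case: l pl sl h => [|a r] pl /= sl h; first lia.
have pr := ispart_tail pl.
have hr := sumn_ge_size pr.
have sr : sumn r <= 3 by lia.
have ea : a = n - sumn r by lia.
clear pl sl h.
case: r pr sr hr ea => [|y [|z [|w [|v r]]]] pr /= sr hr ea.
- finh a n.
- have y0 := part_pos pr (ltn0Sn 0); simpl in y0.
  clear hr pr; case: y y0 sr ea => [|[|[|[|y]]]] /= ? ? ?; try lia; finh a n.
- have y0 := part_pos pr (_ : 1 < 2); simpl in y0.
  have zy := part_mono pr (leq0n 1); simpl in zy.
  clear hr pr; case: y z y0 zy sr ea => [|[|[|[|y]]]] [|[|[|[|z]]]] /= ? ? ? ?; try lia; finh a n.
- have y0 := part_pos pr (_ : 2 < 3); simpl in y0.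
  have zy := part_mono pr (leq0n 1); simpl in zy.
  have wz := part_mono pr (leqnSn 1); simpl in wz.
  clear hr pr; case: y z w y0 zy wz sr ea => [|[|y]] [|[|z]] [|[|w]] /= ? ? ? ? ?; try lia; finh a n.
- lia.
Qed.

Ltac fint t n := first [ rewrite (_ : t = n); [inlist | lia]
  | rewrite (_ : t = n - 2); [inlist | lia]
  | rewrite (_ : t = n - 3); [inlist | lia]
  | rewrite (_ : t = n - 4); [inlist | lia]
  | rewrite (_ : t = n - 5); [inlist | lia]
  | rewrite (_ : t = n - 6); [inlist | lia] ].

Lemma list_size n l : 27 <= n -> ispart l -> sumn l = n -> n < size l + 4 ->
  l \in lemma3p2_list n.
Proof.
move=> n27 pl sl h.
have [t et] := part_split pl.
set p := [seq x <- l | 1 < x] in et.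
have ap : all (fun x => 2 <= x) p by apply/allP => x; rewrite mem_filter => /andP [].
have sp := all_ge_sumn ap.
have e1 : sumn l = sumn p + t by rewrite et sumn_cat sumn_nseq mul1n.
have e2 : size l = size p + t by rewrite et size_cat size_nseq.
move: pl; rewrite et; clear et; move: ap sp e1 e2 => /=.
case: p => [|x [|y [|z [|w p]]]] /= ap sp e1 e2 pl.
- fint t n.
- move: ap => /andP [x2 _]; case: x x2 sp e1 e2 {pl} => [|[|[|[|[|x]]]]] /= ? ? ? ?; try lia; fint t n.
- move: ap => /and3P [x2 y2 _].
  have := part_mono pl (leq0n 1) => /= yx.
  case: x y x2 y2 yx sp e1 e2 {pl} => [|[|[|[|x]]]] [|[|[|[|y]]]] /= ? ? ? ? ? ?; try lia; fint t n.
- move: ap => /and4P [x2 y2 z2 _].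
  case: x y z x2 y2 z2 sp e1 e2 {pl} => [|[|[|x]]] [|[|[|y]]] [|[|[|z]]] /= ? ? ? ? ? ?; try lia; fint t n.
- lia.
Qed.

Lemma notin_list n l : 27 <= n -> ispart l -> sumn l = n -> l \notin lemma3p2_list n ->
  nth 0 l 0 + 4 <= n /\ size l + 4 <= n.
Proof.
move=> n27 pl sl nl; split; rewrite leqNgt; apply/negP => h; move/negP: nl; apply.
  exact: list_head.
exact: list_size.
Qed.

Theorem comb_main n l : 27 <= n -> ispart l -> sumn l = n -> l \notin lemma3p2_list n ->
  5 * 'C(n, 3) <= F l.
Proof.
move=> n27 pl sl nl; have [h1 h2] := notin_list n27 pl sl nl.
have := Pst_all (n := n) (k := 4) (ltac:(lia)) (leqnn 4) pl sl h1 h2 => /= H.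
have := mul_bin_left n 3; have : 24 * 'C(n, 3) <= (n - 3) * 'C(n, 3) by rewrite leq_mul2r; lia.
lia.
Qed.

Lemma count_take_mono (T : eqType) (a : pred T) (s : seq T) k k' : k <= k' ->
  count a (take k s) <= count a (take k' s).
Proof.
move=> kk; rewrite -(cat_take_drop k (take k' s)) take_takel // count_cat; lia.
Qed.

Lemma Wn_props m l : ispart l -> sumn l = m -> forall w, w \in Wn m l ->
  [/\ size w = m, forall v, count_mem v w = nth 0 l v &
      forall k u v, u <= v -> count_mem v (take k w) <= count_mem u (take k w)].
Proof.
elim: m l => [|m IH] l pl sl w /=.
  have -> : l = [::] by case: l pl sl => // a l pl /=; have := part_pos pl (ltn0Sn _); simpl; lia.
  by rewrite inE => /eqP ->; split => // v; rewrite nth_nil.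
case: l pl sl => [//|a l'] pl sl; set l := a :: l' in pl sl *.
case/allpairsPdep => i [w' [ci w'W ->]]; rewrite mem_corners in ci.
have [h1 h2 h3] := IH _ (remc_part pl ci) (ltac:(rewrite remc_sumn // sl //)) w' w'W.
have li : 0 < nth 0 l i by case/andP: ci => il _; exact: part_pos.
split.
- by rewrite size_rcons h1.
- move=> v; rewrite -cats1 count_cat /= h2 remc_nth // eq_sym; case: (eqVneq i v) => [e|ne] /=; [rewrite -e; lia | lia].
- move=> k u v uv; case: (leqP k (size w')) => kw.
    by rewrite -cats1 takel_cat //; apply: h3.
  rewrite take_oversize; last by rewrite size_rcons.
  rewrite -cats1 !count_cat /= !h2 !remc_nth //.
  have := part_mono pl uv; case: (eqVneq u i) => [->|ui]; case: (eqVneq v i) => [->|vi] /=;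
    rewrite ?eqxx //= ?(eq_sym i) ?(negbTE ui) ?(negbTE vi) /=; lia.
Qed.

Lemma Wn_uniq m l : ispart l -> sumn l = m -> uniq (Wn m l).
Proof.
elim: m l => [|m IH] l pl sl //=; case: l pl sl => [//|a l'] pl sl.
apply: allpairs_uniq_dep.
- by apply: filter_uniq; apply: iota_uniq.
- by move=> i; rewrite mem_corners => ci; apply: IH; [exact: remc_part | rewrite remc_sumn // sl].
- by move=> [i1 w1] [i2 w2] _ _ /= /rcons_inj [-> ->].
Qed.

Fixpoint lexlt (s t : seq nat) : bool :=
  match s, t with
  | a :: s', b :: t' => (a < b) || ((a == b) && lexlt s' t')
  | _, _ => false
  end.

Lemma lexlt_irr s : ~~ lexlt s s.
Proof. by elim: s => //= a s IH; rewrite ltnn eqxx. Qed.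

Lemma lexlt_trans s t u : lexlt s t -> lexlt t u -> lexlt s u.
Proof.
elim: s t u => [|a s IH] [|b t] [|c u] //=.
case/orP => [ab|/andP [/eqP <- st]]; case/orP => [bc|/andP [/eqP <- tu]].
- by rewrite (ltn_trans ab bc).
- by rewrite ab.
- by rewrite bc.
- by rewrite eqxx (IH _ _ st tu) orbT.
Qed.

Lemma lexlt_total s t : size s = size t -> s != t -> lexlt s t || lexlt t s.
Proof.
elim: s t => [|a s IH] [|b t] //= [e]; rewrite eqseq_cons negb_and.
case: (ltngtP a b) => //= ab; subst b; rewrite /= => st; exact: IH.
Qed.

Lemma lexlt_nth s t i : size s = size t -> i < size s ->
  (forall j, j < i -> nth 0 s j = nth 0 t j) -> nth 0 s i < nth 0 t i -> lexlt s t.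
Proof.
elim: s t i => [|a s IH] [|b t] [|i] //= [e] il H.
- by move=> ->.
- have -> : a = b by apply: (H 0).
  rewrite eqxx ltnn /=; apply: IH => // j ji; exact: (H j.+1).
Qed.

Lemma lex_min (T : eqType) (f : T -> seq nat) (S : seq T) x0 :
  x0 \in S -> {in S &, forall x y, size (f x) = size (f y)} ->
  {in S &, forall x y, x != y -> f x != f y} ->
  exists2 x, x \in S & forall y, y \in S -> y != x -> lexlt (f x) (f y).
Proof.
elim: S x0 => [//|a S IH] x0 _ Hs Hi.
have Hs' : {in S &, forall x y, size (f x) = size (f y)}.
  by move=> x y xs ys; apply: Hs; rewrite inE ?xs ?ys orbT.
have Hi' : {in S &, forall x y, x != y -> f x != f y}.
  by move=> x y xs ys; apply: Hi; rewrite inE ?xs ?ys orbT.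
case: S IH Hs Hi Hs' Hi' => [|b S] IH Hs Hi Hs' Hi'.
  by exists a; rewrite ?inE // => y; rewrite inE => /eqP ->; rewrite eqxx.
have [x xS xm] := IH b (mem_head _ _) Hs' Hi'.
case: (eqVneq a x) => [ax|ax].
  exists a; first exact: mem_head.
  move=> y; rewrite inE => /orP [/eqP ->|ys]; first by rewrite eqxx.
  by move=> ya; rewrite ax; apply: xm => //; rewrite -ax.
have xS' : x \in [:: a, b & S] by rewrite inE xS orbT.
have := lexlt_total (Hs a x (mem_head _ _) xS') (Hi a x (mem_head _ _) xS' ax).
case/orP => h.
  exists a; first exact: mem_head.
  move=> y; rewrite inE => /orP [/eqP ->|ys]; first by rewrite eqxx.
  move=> ya; case: (eqVneq y x) => [->//|yx]; exact: lexlt_trans h (xm y ys yx).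
exists x => //.
move=> y; rewrite inE => /orP [/eqP -> _ //|ys yx]; exact: xm.
Qed.

Lemma cell_of_off l i c : c < nth 0 l i -> cell_of l (sumn (take i l) + c) = (i, c).
Proof.
elim: l i => [|a l IH] [|i] //= h; first by rewrite h.
rewrite -addnA ltnNge leq_addr /= addKn IH //.
Qed.

Lemma cell_row_le l m : (cell_of l m).1 <= size l.
Proof. by elim: l m => [|a l IH] m //=; case: ifP => //= _; rewrite ltnS IH. Qed.

Definition goodw n l w := [/\ size w = n, forall v, count_mem v w = nth 0 l v &
  forall k u v, u <= v -> count_mem v (take k w) <= count_mem u (take k w)].

Definition wrow (w : seq nat) (x : nat) := nth 0 w x.
Definition wcol (w : seq nat) (x : nat) := count_mem (nth 0 w x) (take x w).
Definition wslot l w x := sumn (take (wrow w x) l) + wcol w x.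

Section Word.
Variables (n : nat) (l w : seq nat).
Hypotheses (pl : ispart l) (sl : sumn l = n) (gw : goodw n l w).

Lemma wrow_pos x : x < n -> 0 < nth 0 l (wrow w x).
Proof.
case: gw => s c _ xn; rewrite -c /wrow -has_count; apply/hasP; exists (nth 0 w x) => /=; last by [].
by apply: mem_nth; rewrite s.
Qed.

Lemma wrow_lt x : x < n -> wrow w x < size l.
Proof.
move=> xn; have := wrow_pos xn; case: (ltnP (wrow w x) (size l)) => // h.
by rewrite nth_default.
Qed.

Lemma wcol_lt x : x < n -> wcol w x < nth 0 l (wrow w x).
Proof.
case: gw => s c _ xn; rewrite -c /wcol /wrow.
rewrite -[X in _ < count _ X](cat_take_drop x w) count_cat (drop_nth 0); last by rewrite s.
rewrite /= eqxx; lia.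
Qed.

Lemma sumn_take_le k : sumn (take k l) <= sumn l.
Proof. by rewrite -{2}(cat_take_drop k l) sumn_cat leq_addr. Qed.

Lemma wslot_lt x : x < n -> wslot l w x < n.
Proof.
move=> xn; rewrite /wslot; have := wcol_lt xn; have := wrow_lt xn.
move=> rl cl; have := sumn_take_le (wrow w x).+1; rewrite (take_nth 0 rl) sumn_rcons sl; lia.
Qed.

Lemma wslot_cell x : x < n -> cell_of l (wslot l w x) = (wrow w x, wcol w x).
Proof. by move=> xn; rewrite /wslot cell_of_off // wcol_lt. Qed.

Lemma wcol_incr y z : y < z -> z < n -> wrow w y = wrow w z -> wcol w y < wcol w z.
Proof.
case: gw => s _ _ yz zn e; rewrite /wcol.
rewrite -/(wrow w z) -e /wrow.
have := count_take_mono (pred1 (nth 0 w y)) w yz.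
by rewrite (take_nth 0) ?s 1?(ltn_trans yz) // -cats1 count_cat /= eqxx addn1.
Qed.

Lemma wslot_inj x y : x < n -> y < n -> wslot l w x = wslot l w y -> x = y.
Proof.
move=> xn yn e; have := wslot_cell xn; have := wslot_cell yn; rewrite e => -> [er ec].
case: (ltngtP x y) => // h.
  by have := wcol_incr h yn (esym er); rewrite ec ltnn.
by have := wcol_incr h xn er; rewrite ec ltnn.
Qed.

Lemma wcs y z : y < z -> z < n -> wcol w z = wcol w y -> wrow w y < wrow w z.
Proof.
case: gw => s c H yz zn e; rewrite ltnNge; apply/negP => zy.
have yn : y < n by lia.
have := count_take_mono (pred1 (wrow w z)) w (yz : y.+1 <= z).
have := H y.+1 _ _ zy; rewrite (take_nth 0) ?s // -cats1 count_cat /= eqxx addn1.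
move=> h1 h2; move: e h1 h2; rewrite /wcol /wrow => e h1 h2; rewrite e in h2; have := leq_trans h1 h2; by rewrite ltnn.
Qed.

End Word.

Definition slotf n l w (x : 'I_n) : 'I_n := insubd x (wslot l w x).

Definition sw n l w : 'S_n := odflt 1%g [pick s : 'S_n | [forall x, s x == slotf l w x]].

Lemma sw_val n l w : ispart l -> sumn l = n -> goodw n l w ->
  forall x : 'I_n, val (sw n l w x) = wslot l w x.
Proof.
move=> pl sl gw.
have vs (x : 'I_n) : val (slotf l w x) = wslot l w x by rewrite val_insubd (wslot_lt pl sl gw (ltn_ord x)).
have inj : injective (@slotf n l w).
  by move=> x y e0; have := congr1 val e0; rewrite !vs => e; apply: val_inj; exact: (wslot_inj pl sl gw (ltn_ord x) (ltn_ord y) e).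
rewrite /sw; case: pickP => [s /forallP H|H] x /=.
  by rewrite (eqP (H x)) vs.
by have := H (perm inj); rewrite (_ : [forall x, _] = true) //; apply/forallP => y; rewrite permE.
Qed.

Definition tabw n (w : seq nat) : tabloid n := [ffun x : 'I_n => inord (nth 0 w x)].

Lemma tab_sw n l w : ispart l -> sumn l = n -> goodw n l w -> tab_of l (sw n l w) = tabw n w.
Proof.
move=> pl sl gw; apply/ffunP => x; rewrite !ffunE.
by rewrite (sw_val pl sl gw) (wslot_cell pl sl gw (ltn_ord x)).
Qed.

Definition CS n l (s : 'S_n) := forall y z : 'I_n, y < z ->
  (cell_of l (s z)).2 = (cell_of l (s y)).2 -> (cell_of l (s y)).1 < (cell_of l (s z)).1.

Lemma CS_sw n l w : ispart l -> sumn l = n -> goodw n l w -> CS l (sw n l w).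
Proof.
move=> pl sl gw y z yz; rewrite !(sw_val pl sl gw) !(wslot_cell pl sl gw) //=.
by apply: (wcs pl sl gw).
Qed.

Definition key n (r : tabloid n) : seq nat := [seq (r x : nat) | x <- enum 'I_n].

Lemma size_key n (r : tabloid n) : size (key r) = n.
Proof. by rewrite size_map size_enum_ord. Qed.

Lemma nth_key n (r : tabloid n) (x : 'I_n) : nth 0 (key r) x = r x.
Proof. by rewrite (nth_map x) ?size_enum_ord // nth_ord_enum. Qed.

Lemma key_inj n : injective (@key n).
Proof.
move=> r r' e; apply/ffunP => x; apply: ord_inj.
by rewrite -!nth_key e.
Qed.

Lemma tab_of_val n l (s : 'S_n) x : size l <= n -> (tab_of l s x : nat) = (cell_of l (s x)).1.
Proof. by move=> ln; rewrite ffunE inordK // ltnS (leq_trans (cell_row_le _ _)). Qed.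

Lemma lex_polyt n l (s p : 'S_n) : size l <= n -> CS l s -> colstab l s p -> p != 1%g ->
  lexlt (key (tab_of l s)) (key (tab_of l (p^-1 * s)%g)).
Proof.
move=> ln cs /forallP cp p1.
pose q := (p^-1)%g.
have ex : exists j, (j < n) && [exists x : 'I_n, (nat_of_ord x == j) && (q x != x)].
  case: (boolP [exists x, q x != x]) => [/existsP [x hx]|/existsPn H].
    by exists (nat_of_ord x); rewrite ltn_ord /=; apply/existsP; exists x; rewrite eqxx.
  have q1 : q = 1%g by apply/permP => x; rewrite perm1; move: (H x); rewrite negbK => /eqP.
  by move: p1; rewrite -(invgK p) -/q q1 invg1 eqxx.
case: (ex_minnP ex) => j /andP [jn /existsP [y0 /andP [/eqP vy hy]]] jmin.
have qfix (x : 'I_n) : x < y0 -> q x = x.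
  move=> xy; apply/eqP; apply/negPn/negP => hx.
  have Px : (x < n) && [exists x' : 'I_n, (nat_of_ord x' == x) && (q x' != x')].
    by rewrite ltn_ord /=; apply/existsP; exists x; rewrite eqxx hx.
  move: (jmin _ Px) xy; rewrite -vy; lia.
set z := q y0.
have zy : y0 < z.
  rewrite ltn_neqAle; apply/andP; split.
    by apply/negP => /eqP e; move: hy; rewrite -/z (ord_inj e) eqxx.
  rewrite leqNgt; apply/negP => zy.
  have e : q z = q y0 by rewrite qfix.
  by move: hy; rewrite -/z (perm_inj e) eqxx.
have pz : p z = y0 by rewrite /z /q permKV.
have col : (cell_of l (s y0)).2 = (cell_of l (s z)).2 by have := eqP (cp z); rewrite pz.
have row := cs y0 z zy (esym col).
apply: (@lexlt_nth _ _ y0); rewrite ?size_key ?ltn_ord //.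
  move=> j0 j0y; have j0n : j0 < n by apply: ltn_trans j0y (ltn_ord y0).
  rewrite -[j0]/(nat_of_ord (Ordinal j0n)) !nth_key !ffunE permM -/q qfix //.
rewrite !nth_key !tab_of_val // permM -/q -/z //.
Qed.

Lemma polyt_entry n l (s : 'S_n) (r : tabloid n) :
  (polytabloid l s) 0%R (enum_rank r) =
  (\sum_(p : 'S_n | colstab l s p) (-1) ^+ odd_perm p * ((r == tab_of l (p^-1 * s)%g)%:R))%R.
Proof.
rewrite /polytabloid summxE; apply: eq_bigr => p _.
by rewrite mxE /tvec mxE eqxx /= (inj_eq enum_rank_inj) mulr_natr.
Qed.

Lemma polyt_top n l (s : 'S_n) : size l <= n -> CS l s ->
  (polytabloid l s) 0%R (enum_rank (tab_of l s)) = 1%R.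
Proof.
move=> ln cs; rewrite polyt_entry (bigD1 1%g) /=; last by apply/forallP => x; rewrite perm1.
rewrite odd_perm1 invg1 mul1g eqxx expr0 mul1r big1 ?addr0 // => p /andP [cp p1].
have := lex_polyt ln cs cp p1; case: eqP => [<-|_]; last by rewrite mulr0.
by rewrite (negbTE (lexlt_irr _)).
Qed.

Lemma polyt_low n l (s : 'S_n) r : size l <= n -> CS l s ->
  lexlt (key r) (key (tab_of l s)) -> (polytabloid l s) 0%R (enum_rank r) = 0%R.
Proof.
move=> ln cs lr; rewrite polyt_entry big1 // => p cp.
case: (eqVneq p 1%g) => [->|p1].
  rewrite invg1 mul1g; case: eqP => [e|_]; last by rewrite mulr0.
  by move: lr; rewrite -e (negbTE (lexlt_irr _)).
have := lex_polyt ln cs cp p1; case: eqP => [<-|_]; last by rewrite mulr0.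
move=> h; have := lexlt_trans lr h; by rewrite (negbTE (lexlt_irr _)).
Qed.

Section Indep.
Variables (n : nat) (l : seq nat).
Hypotheses (pl : ispart l) (sl : sumn l = n).

Let W := Wn n l.
Let m := size W.
Let ln : size l <= n. Proof. by rewrite -sl; apply: sumn_ge_size. Qed.

Let gW (k : 'I_m) : goodw n l (nth [::] W k).
Proof.
have [h1 h2 h3] := Wn_props pl sl (mem_nth [::] (ltn_ord k)); by split.
Qed.

Definition Mspecht : 'M[algC]_(m, dimM n) :=
  \matrix_(k < m) polytabloid l (sw n l (nth [::] W k)).

Lemma tabw_inj (w w' : seq nat) : goodw n l w -> goodw n l w' -> tabw n w = tabw n w' -> w = w'.
Proof.
move=> gw gw' e; case: (gw) => s1 _ _; case: (gw') => s2 _ _.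
apply: (@eq_from_nth _ 0); first by rewrite s1 s2.
move=> i; rewrite s1 => i_n.
have := congr1 (fun f : tabloid n => nat_of_ord (f (Ordinal i_n))) e; rewrite !ffunE /=.
have r1 := wrow_lt gw i_n; have r2 := wrow_lt gw' i_n.
rewrite /wrow in r1 r2.
rewrite !inordK //; lia.
Qed.

Lemma Mspecht_free : row_free Mspecht.
Proof.
apply: inj_row_free => u uM; apply/rowP => k; rewrite mxE; apply/eqP/negPn/negP => uk.
pose K := [seq k <- enum 'I_m | u 0%R k != 0%R].
pose f (k : 'I_m) := key (tabw n (nth [::] W k)).
have kK : k \in K by rewrite mem_filter uk mem_enum.
have hs : {in K &, forall x y, size (f x) = size (f y)}.
  by move=> x y _ _; rewrite !size_key.
have hi : {in K &, forall x y, x != y -> f x != f y}.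
  move=> x y _ _ xy; apply/negP => /eqP /key_inj /(tabw_inj (gW x) (gW y)) e.
  move/negP: xy; apply; rewrite -(inj_eq val_inj) /=.
  by rewrite -(nth_uniq [::] (ltn_ord x) (ltn_ord y) (Wn_uniq pl sl)) e.
have [k0 k0K k0m] := lex_min kK hs hi.
have : (u *m Mspecht)%R 0%R (enum_rank (tabw n (nth [::] W k0))) = 0%R by rewrite uM mxE.
rewrite mxE (bigD1 k0) //= big1 ?addr0.
  rewrite mxE -(tab_sw pl sl (gW k0)) polyt_top ?mulr1 //; last exact: CS_sw.
  by move/eqP; move: k0K; rewrite mem_filter => /andP [/negbTE -> _].
move=> k' k'k0; case: (eqVneq (u 0%R k') 0%R) => [->|uk']; first by rewrite mul0r.
rewrite mxE polyt_low ?mulr0 //; first exact: CS_sw.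
rewrite (tab_sw pl sl (gW k')); apply: k0m => //.
by rewrite mem_filter uk' mem_enum.
Qed.

Lemma rank_ge_F : F l <= \rank (specht_span n l).
Proof.
have -> : F l = m by rewrite /F sl /m /W size_Wn.
have := Mspecht_free; rewrite /row_free => /eqP <-.
apply: mxrankS; apply/row_subP => k; rewrite rowK.
have -> : polytabloid l (sw n l (nth [::] W k)) =
  row (enum_rank (sw n l (nth [::] W k))) (specht_span n l) by rewrite rowK enum_rankK.
exact: row_sub.
Qed.

End Indep.

Local Open Scope ring_scope.

Lemma tperm1 n : Defs.tperm_mx (1%g : 'S_n) = 1%:M.
Proof.
apply/matrixP => i j; rewrite !mxE.
have -> : tact 1%g (enum_val i) = enum_val i by apply/ffunP => y; rewrite ffunE invg1 perm1.
by rewrite (inj_eq enum_val_inj) eq_sym.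
Qed.

Lemma specht_char1 n l : specht_char l (1%g : 'S_n) = (\rank (specht_span n l))%:R.
Proof.
rewrite /specht_char tperm1 mulmx1.
set B := row_base _.
have -> : B *m pinvmx B = 1%:M.
  apply: (row_free_inj (row_base_free (specht_span n l))).
  by rewrite mulmxKpV ?submx_refl // mul1mx.
by rewrite mxtrace1.
Qed.

Unset Implicit Arguments. Set Strict Implicit.

Theorem lemma3p2 (n : nat) (hn : (27 <= n)%N) (phi : 'CF([set: 'S_n]))
    (l : seq nat) :
  phi \is a character ->
  phi 1%g < (5 * 'C(n, 3))%:R ->
  is_partition n l ->
  (exists2 i : Iirr [set: 'S_n],
      i \in irr_constt phi & forall g : 'S_n, 'chi_i g = specht_char l g) ->
  l \in lemma3p2_list n.
Proof.
move=> phiC phi1 lP [i iC chiE].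
have le := char1_ge_constt phiC iC.
rewrite chiE specht_char1 in le.
have := le_lt_trans le phi1; rewrite ltr_nat => rk.
case/and3P: lP => s0 z0 /eqP sl.
have pl : ispart l by rewrite /ispart s0 z0.
apply/negPn/negP => nl.
have := comb_main hn pl sl nl; have := rank_ge_F pl sl.
move: rk; clear; lia.
Qed.
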